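(* Let $(M,\rho)$ be a complete metric space and let $f,g:M\to\mathbb{R}\cup\{+\infty\}$ be proper and lower semicontinuous, with $f$ bounded below. Assume that for every $x\in\operatorname{dom}|\widetilde\nabla f|$ we have $x\in\operatorname{dom} g$ and $$|\widetilde\nabla g|(x)\le|\widetilde\nabla f|(x).$$ Then $$\inf_{x\in\operatorname{dom} f}(f(x)-g(x))\ge\inf_M f-\inf_M g.$$ In particular $\inf_M g>-\infty$, and $f(x)-\inf_M f\ge g(x)-\inf_M g$ for all $x\in M$.
   Context: $\operatorname{dom} f:=\{x:f(x)<+\infty\}$; $f$ proper if $\operatorname{dom} f\ne\varnothing$; on $\operatorname{dom} f$, $f(x)-g(x)=-\infty$ if $g(x)=+\infty$. $[t]^+:=\max\{0,t\}$ (with $[f(x)-f(y)]^+:=0$ if $f(y)=+\infty$). For $x\in\operatorname{dom} f$, the global slope is $|\widetilde\nabla f|(x):=\sup_{y\neq x}\frac{[f(x)-f(y)]^+}{\rho(x,y)}\in[0,+\infty]$, and $\operatorname{dom}|\widetilde\nabla f|:=\{x\in\operatorname{dom} f:\ |\widetilde\nabla f|(x)<+\infty\}$. *)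

(* Defs.v *)
From HB Require Import structures.
From mathcomp Require Import all_boot all_order all_algebra.
From mathcomp Require Import all_classical all_reals ereal.
Set Implicit Arguments. Unset Strict Implicit. Unset Printing Implicit Defensive.
Import Order.TTheory GRing.Theory Num.Theory.
Local Open Scope classical_set_scope.
Local Open Scope ring_scope.

Definition is_metric (R : realType) (M : Type) (rho : M -> M -> R) : Prop :=
  (forall x y, 0 <= rho x y) /\
  (forall x y, rho x y = 0 <-> x = y) /\
  (forall x y, rho x y = rho y x) /\
  (forall x y z, rho x z <= rho x y + rho y z).

Definition metric_complete (R : realType) (M : Type) (rho : M -> M -> R) : Prop :=
  forall u : nat -> M,
    (forall e : R, 0 < e -> exists N : nat, forall m n : nat,
        (N <= m)%N -> (N <= n)%N -> rho (u m) (u n) < e) ->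
    exists x : M, forall e : R, 0 < e -> exists N : nat, forall n : nat,
        (N <= n)%N -> rho (u n) x < e.

Local Open Scope ereal_scope.

(* f : M -> R ∪ {+oo} *)
Definition never_minfty (R : realType) (M : Type) (f : M -> \bar R) : Prop :=
  forall x, f x != -oo.

Definition dom (R : realType) (M : Type) (f : M -> \bar R) : set M :=
  [set x | f x < +oo].

Definition proper_ext (R : realType) (M : Type) (f : M -> \bar R) : Prop :=
  dom f !=set0.

Definition lsc (R : realType) (M : Type) (rho : M -> M -> R) (f : M -> \bar R) : Prop :=
  forall x (a : R), a%:E < f x ->
    exists delta : R, (0 < delta)%R /\
      forall y, (rho x y < delta)%R -> a%:E < f y.

Definition bounded_below (R : realType) (M : Type) (f : M -> \bar R) : Prop :=
  exists m : R, forall x, m%:E <= f x.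

(* [t]^+ := max{0,t}; with f(x) finite and f(y) = +oo, f x - f y = -oo so
   the positive part is 0, as in the paper's convention. *)
Definition pos_part (R : realType) (t : \bar R) : \bar R := maxe 0 t.

(* global slope |~nabla f|(x) = sup_{y <> x} [f x - f y]^+ / rho(x,y) in [0,+oo]
   (0 is included in the set so that the value lies in [0,+oo] even if M = {x}). *)
Definition global_slope (R : realType) (M : Type) (rho : M -> M -> R)
    (f : M -> \bar R) (x : M) : \bar R :=
  ereal_sup ([set 0] `|`
    [set pos_part (f x - f y) * ((rho x y)^-1)%:E | y in [set y | y <> x]]).

Definition dom_slope (R : realType) (M : Type) (rho : M -> M -> R)
    (f : M -> \bar R) : set M :=
  [set x | f x < +oo /\ global_slope rho f x < +oo].

(* Main.v *)
Require Import Defs.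
From HB Require Import structures.
From mathcomp Require Import all_boot all_order all_algebra.
From mathcomp Require Import all_classical all_reals ereal.
From mathcomp Require Import ring lra.
Import Order.TTheory GRing.Theory Num.Theory.
Local Open Scope classical_set_scope.
Local Open Scope ring_scope.
Local Open Scope ereal_scope.

Set Implicit Arguments. Unset Strict Implicit.


Lemma met_refl (R : realType) (M : Type) (rho : M -> M -> R) x :
  is_metric rho -> rho x x = 0%R.
Proof. by case=> _ [H _]; apply/H. Qed.

Lemma efin_ex (R : realType) (e : \bar R) : e != -oo -> e < +oo -> exists b : R, e = b%:E.
Proof. by case: e => [b| |] //; exists b. Qed.

Lemma archi_inv (R : realType) (t : R) : (0 < t)%R -> exists n : nat, ((n.+1%:R)^-1 < t)%R.
Proof.
move=> t0; have ti0 : (0 < t^-1)%R by rewrite invr_gt0.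
have := archi_boundP (ltW ti0).
set n := Num.bound _ => H; exists n.
rewrite -(invrK t) ltf_pV2 ?posrE //.
by apply: (lt_trans H); rewrite ltr_nat.
Qed.

Fixpoint seqit {T : Type} (x0 : T) (h : nat -> T -> T) (n : nat) : T :=
  match n with 0%N => x0 | k.+1 => h k (seqit x0 h k) end.

Lemma lee_gt0P (R : realType) (x : \bar R) (y : R) :
  (forall r : R, (0 < r)%R -> x <= (y + r)%:E) -> x <= y%:E.
Proof. by move=> H; apply/lee_addgt0Pr => r r0; rewrite -EFinD; exact: H. Qed.


Lemma ekeland (R : realType) (M : Type) (rho : M -> M -> R) (f : M -> \bar R)
  (m : R) (x0 : M) (mu : R) :
  is_metric rho -> metric_complete rho -> never_minfty f -> lsc rho f ->
  (forall x, m%:E <= f x) -> f x0 < +oo -> (0 < mu)%R ->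
  exists z, f z + (mu * rho x0 z)%:E <= f x0 /\
            forall v, f z <= f v + (mu * rho z v)%:E.
Proof.
move=> hm hc hf hl hb hx0 mu0.
have [rpos [rid [rsym rtri]]] := hm.
have rxx : forall x, rho x x = 0%R by move=> x; apply/rid.
pose e n := (((n.+1)%:R)^-1 : R)%R.
have e0 : forall n, (0 < e n)%R by move=> n; rewrite invr_gt0 ltr0n.
pose S w v := f v + (mu * rho w v)%:E <= f w.
have step : forall p : nat * M, exists v, f p.2 < +oo ->
    S p.2 v /\ forall u, S p.2 u -> f v <= f u + (e p.1)%:E.
  move=> [n w] /=.
  case: (pselect (f w < +oo)) => [wfin|wn]; last by exists w.
  pose I := ereal_inf (f @` S w).
  have Sww : S w w by rewrite /S rxx mulr0 adde0.
  have Ile : I <= f w by apply: ereal_inf_lbound; exists w.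
  have Ige : m%:E <= I by apply: le_ereal_inf_tmp => _ [u _ <-]; exact: hb.
  have Ifin : I \is a fin_num.
    apply/fin_numP; split.
      by rewrite gt_eqF // (lt_le_trans (ltNyr m) Ige).
    by rewrite lt_eqF // (le_lt_trans Ile wfin).
  have [_ [v Sv <-] H] := lb_ereal_inf_adherent (e0 n) Ifin.
  exists v => _; split => // u Su.
  apply: (le_trans (ltW H)); apply: leeD2r; apply: ereal_inf_lbound; by exists u.
have [nx Hnx] := choice step.
pose w := seqit x0 (fun n x => nx (n, x)).
have wS : forall n, f (w n) < +oo /\ S (w n) (w n.+1) /\
    forall u, S (w n) u -> f (w n.+1) <= f u + (e n)%:E.
  elim => [|n [fin [Sn _]]].
    by split => //; exact: (Hnx (0%N, x0) hx0).
  have fin1 : f (w n.+1) < +oo.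
    apply: (le_lt_trans _ fin); apply: (le_trans _ Sn).
    by apply: leeDl; rewrite lee_fin mulr_ge0 // ltW.
  by split => //; exact: (Hnx (n.+1, w n.+1) fin1).
pose a n := fine (f (w n)).
have fa : forall n, f (w n) = (a n)%:E.
  move=> n; rewrite /a fineK //; apply/fin_numP; split; first exact: hf.
  by rewrite lt_eqF //; case: (wS n).
have R1 : forall n, (a n.+1 + mu * rho (w n) (w n.+1) <= a n)%R.
  by move=> n; case: (wS n) => _ [+ _]; rewrite /S !fa -EFinD lee_fin.
have R2 : forall n u b, f u = b%:E -> (b + mu * rho (w n) u <= a n)%R ->
    (a n.+1 <= b + e n)%R.
  move=> n u b fu H; case: (wS n) => _ [_ +] => /(_ u).
  by rewrite /S fu !fa -!EFinD !lee_fin => /(_ H).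
have am : forall n, (m <= a n)%R by move=> n; have := hb (w n); rewrite fa lee_fin.
have R3 : forall n k, (a (n + k)%N + mu * rho (w n) (w (n + k)%N) <= a n)%R.
  move=> n; elim => [|k IH]; first by rewrite addn0 rxx mulr0 addr0.
  have := R1 (n + k)%N; rewrite -addnS.
  have := rtri (w n) (w (n + k)%N) (w (n + k.+1)%N).
  move=> T H.
  have : (mu * rho (w n) (w (n + k.+1)%N) <= mu * rho (w n) (w (n + k)%N)
     + mu * rho (w (n + k)%N) (w (n + k.+1)%N))%R.
    by rewrite -mulrDr ler_wpM2l // ltW.
  lra.
have R4 : forall n k, (mu * rho (w n.+1) (w (n.+1 + k)%N) <= e n)%R.
  move=> n k.
  have H1 := R3 n.+1 k.
  have H2 := R3 n k.+1.
  have H3 := R2 n (w (n.+1 + k)%N) _ (fa _).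
  rewrite addSn -addnS in H3 H1 *.
  have H4 : (0 <= mu * rho (w n) (w (n + k.+1)%N))%R by rewrite mulr_ge0 // ltW.
  have H5 := H3 H2; lra.
have cauchy : forall e : R, (0 < e)%R -> exists N : nat, forall m n : nat,
        (N <= m)%N -> (N <= n)%N -> (rho (w m) (w n) < e)%R.
  move=> ep ep0.
  have [N HN] := archi_inv (mulr_gt0 mu0 ep0).
  exists N.+1 => p q.
  wlog: p q / (q <= p)%N.
    move=> W hp hq; case: (leqP q p) => pq; first exact: W.
    by rewrite rsym; apply: W => //; apply: ltnW.
  move=> qp hp hq.
  case: q qp hq => // q qp hq.
  rewrite -(subnKC qp).
  have H := R4 q (p - q.+1)%N.
  have H' : (e q <= e N)%R.
    by rewrite /e lef_pV2 ?posrE ?ltr0n // ler_nat.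
  have HN' : (e N < mu * ep)%R by [].
  have : (mu * rho (w q.+1) (w (q.+1 + (p - q.+1))%N) < mu * ep)%R by lra.
  by rewrite ltr_pM2l // rsym.
have [z hz] := hc w cauchy.
have R5 : forall n, f z <= (a n - mu * rho (w n) z)%:E.
  move=> n; apply: lee_gt0P => r r0.
  rewrite leNgt; apply/negP => H.
  have [d [d0 Hd]] := hl z _ H.
  have rm0 : (0 < r / mu)%R by rewrite divr_gt0.
  have [N HN] := hz (Order.min d (r / mu))%R ltac:(by rewrite lt_min d0 rm0).
  have := HN (n + N)%N (leq_addl _ _); rewrite lt_min => /andP [h1 h2].
  have := Hd (w (n + N)%N); rewrite rsym fa lte_fin => /(_ h1) h3.
  have h4 : (mu * rho (w (n + N)%N) z < r)%R.
    have : (mu * rho (w (n + N)%N) z < mu * (r / mu))%R by rewrite ltr_pM2l.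
    by rewrite mulrCA divff ?mulr1 // gt_eqF.
  have h5 := R3 n N.
  have h6 : (mu * rho (w n) z <= mu * rho (w n) (w (n + N)%N) + mu * rho (w (n + N)%N) z)%R.
    by rewrite -mulrDr; apply: ler_wpM2l; [exact: ltW|exact: rtri].
  move: h3 h4 h5 h6 (rpos (w n) z); clear; move=> h3 h4 h5 h6 h7; lra.
have fzfin : f z \is a fin_num.
  apply/fin_numP; split; first exact: hf.
  by rewrite lt_eqF // (le_lt_trans (R5 0%N)) // ltry.
set c := fine (f z).
have fz : f z = c%:E by rewrite /c fineK.
have R5' : forall n, (c + mu * rho (w n) z <= a n)%R.
  by move=> n; have := R5 n; rewrite fz lee_fin; lra.
exists z; split.
  by rewrite fz -EFinD; have -> : x0 = w 0%N by []; rewrite fa lee_fin.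
move=> v; case Ev: (f v) => [b| |]; last by have := hf v; rewrite Ev.
  2: by rewrite addye // leey.
rewrite fz -EFinD lee_fin leNgt; apply/negP => H.
have H6 : forall n, (c - b <= e n)%R.
  move=> n.
  have h1 : (b + mu * rho (w n) v <= a n)%R.
    have h6 : (mu * rho (w n) v <= mu * rho (w n) z + mu * rho z v)%R.
      by rewrite -mulrDr; apply: ler_wpM2l; [exact: ltW|exact: rtri].
    have := R5' n; lra.
  have := R2 n v b Ev h1.
  have := R5' n.+1.
  have : (0 <= mu * rho (w n.+1) z)%R by apply: mulr_ge0; [exact: ltW|exact: rpos].
  lra.
have h0 : (0 <= mu * rho z v)%R by apply: mulr_ge0; [exact: ltW|exact: rpos].
have cb : (0 < c - b)%R by lra.
have [n Hn] := archi_inv cb.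
have Hn2 : (e n < c - b)%R by [].
by have := H6 n; lra.
Qed.


Lemma pos_part_fin (R : realType) (r : R) : pos_part r%:E = (Num.max 0 r)%:E.
Proof. by rewrite /pos_part EFin_max. Qed.

Lemma pos_part_Ny (R : realType) (c : R) : pos_part (c%:E - +oo) = 0.
Proof. by rewrite /pos_part addeNy maxeNy. Qed.

Lemma slope_le (R : realType) (M : Type) (rho : M -> M -> R) (f : M -> \bar R)
  (z : M) (mu : R) :
  is_metric rho -> never_minfty f -> f z \is a fin_num -> (0 <= mu)%R ->
  (forall v, f z <= f v + (mu * rho z v)%:E) -> global_slope rho f z <= mu%:E.
Proof.
move=> hm hf fz mu0 H; have [rpos [rid [rsym rtri]]] := hm.
rewrite /global_slope; apply: ge_ereal_sup => _ [->| [y hy <-]]; first by rewrite lee_fin.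
have r0 : (0 < rho z y)%R.
  by rewrite lt_neqAle rpos andbT eq_sym; apply/eqP => /rid /esym.
rewrite -(fineK fz); set c := fine (f z).
have := H y; rewrite -(fineK fz) -/c.
case Ey: (f y) => [b| |]; last by have := hf y; rewrite Ey.
  rewrite -EFinB pos_part_fin -EFinM -EFinD !lee_fin => h.
  rewrite ler_pdivrMr // ge_max mulr_ge0 //=; lra.
by rewrite pos_part_Ny mul0e lee_fin.
Qed.

Lemma slope_ineq (R : realType) (M : Type) (rho : M -> M -> R) (f : M -> \bar R)
  (x : M) (s : R) :
  is_metric rho -> never_minfty f -> f x \is a fin_num -> global_slope rho f x <= s%:E ->
  forall v, f x <= f v + (s * rho x v)%:E.
Proof.
move=> hm hf fx H v; have [rpos [rid [rsym rtri]]] := hm.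
case: (pselect (v = x)) => [->|vx].
  have -> : rho x x = 0%R by apply/rid.
  by rewrite mulr0 adde0.
have r0 : (0 < rho x v)%R.
  by rewrite lt_neqAle rpos andbT eq_sym; apply/eqP => /rid /esym.
have H2 : pos_part (f x - f v) * ((rho x v)^-1)%:E <= s%:E.
  apply: le_trans H; apply: ereal_sup_ubound; right; by exists v.
move: H2; rewrite -(fineK fx); set c := fine (f x).
case Ev: (f v) => [b| |]; last 2 first.
- by rewrite addye // leey.
- by have := hf v; rewrite Ev.
rewrite -EFinB pos_part_fin -EFinM -EFinD !lee_fin ler_pdivrMr // ge_max => /andP [_ h].
lra.
Qed.


Lemma dom_slope_fin (R : realType) (M : Type) (rho : M -> M -> R) (f : M -> \bar R) w :
  never_minfty f -> dom_slope rho f w ->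
  f w \is a fin_num /\ global_slope rho f w \is a fin_num /\
  (0 <= fine (global_slope rho f w))%R.
Proof.
move=> hf [h1 h2].
have s0 : 0 <= global_slope rho f w by apply: ereal_sup_ubound; left.
have sf : global_slope rho f w \is a fin_num.
  apply/fin_numP; split; last by rewrite lt_eqF.
  by rewrite gt_eqF // (lt_le_trans _ s0) // ltNyr.
split; first by apply/fin_numP; split; [exact: hf| rewrite lt_eqF].
by split => //; rewrite -lee_fin fineK.
Qed.

Lemma chain (R : realType) (M : Type) (rho : M -> M -> R) (f g : M -> \bar R)
  (m q : R) (x y : M) (gy : R) :
  is_metric rho -> metric_complete rho -> never_minfty f -> never_minfty g ->
  lsc rho f -> (forall x, m%:E <= f x) ->
  (forall x, dom_slope rho f x ->
     dom g x /\ global_slope rho g x <= global_slope rho f x) ->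
  (0 < q)%R -> (q < 1)%R -> dom_slope rho f x -> g y = gy%:E ->
  forall ep, (0 < ep)%R ->
  (q * fine (g x) <= q * gy + ep + (fine (f x) - m))%R.
Proof.
move=> hm hc hf hg hl hb hH q0 q1 hx hy ep ep0.
have [rpos [rid [rsym rtri]]] := hm.
have rxx : forall x, rho x x = 0%R by move=> x'; apply/rid.
pose sl w := fine (global_slope rho f w).
have step : forall w, exists w', dom_slope rho f w ->
   dom_slope rho f w' /\ (sl w' <= q * sl w)%R /\
   f w' + (q * sl w * rho w w')%:E <= f w.
  move=> w; case: (pselect (dom_slope rho f w)) => [dw|]; last by exists w.
  have [fw [sw s0]] := dom_slope_fin hf dw.
  case: (eqVneq (sl w) 0%R) => [sl0|sln0].
    exists w => _; split => //; split; first by rewrite sl0 mulr0.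
    by rewrite rxx mulr0 adde0.
  have mu0 : (0 < q * sl w)%R by rewrite mulr_gt0 // lt_neqAle eq_sym sln0.
  have [z [hz1 hz2]] := ekeland hm hc hf hl hb (proj1 dw) mu0.
  have fzf : f z \is a fin_num.
    apply/fin_numP; split; first exact: hf.
    rewrite lt_eqF //; apply: (le_lt_trans _ (proj1 dw)); apply: (le_trans _ hz1).
    by apply: leeDl; rewrite lee_fin mulr_ge0 // ltW.
  have hs := slope_le hm hf fzf (ltW mu0) hz2.
  have dz : dom_slope rho f z.
    split; first by rewrite -(fineK fzf) ltry.
    by apply: (le_lt_trans hs); exact: ltry.
  exists z => _; split => //; split => //.
  have [_ [sz _]] := dom_slope_fin hf dz.
  by rewrite -lee_fin /sl fineK.
have [nx Hnx] := choice step.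
pose w := seqit x (fun _ v => nx v).
have dw : forall k, dom_slope rho f (w k).
  elim => [//|k IH]; exact: (proj1 (Hnx _ IH)).
pose a k := fine (f (w k)).
pose s k := sl (w k).
pose G k := fine (g (w k)).
have fa : forall k, f (w k) = (a k)%:E.
  by move=> k; have [h _] := dom_slope_fin hf (dw k); rewrite /a fineK.
have sa : forall k, global_slope rho f (w k) = (s k)%:E.
  by move=> k; have [_ [h _]] := dom_slope_fin hf (dw k); rewrite /s /sl fineK.
have hs0 : forall k, (0 <= s k)%R.
  by move=> k; have [_ [_ h]] := dom_slope_fin hf (dw k).
have gfin : forall k, g (w k) \is a fin_num.
  move=> k; have [h _] := hH _ (dw k); apply/fin_numP; split; first exact: hg.
  by rewrite lt_eqF.
have ga : forall k, g (w k) = (G k)%:E by move=> k; rewrite /G fineK.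
have hs : forall k, (s k.+1 <= q * s k)%R by move=> k; have [_ [h _]] := Hnx _ (dw k).
have hd : forall k, (a k.+1 + q * s k * rho (w k) (w k.+1) <= a k)%R.
  by move=> k; have [_ [_ h]] := Hnx _ (dw k); move: h; rewrite -[nx (w k)]/(w k.+1) !fa -EFinD lee_fin.
have am : forall k, (m <= a k)%R by move=> k; have := hb (w k); rewrite fa lee_fin.
have gsl : forall k v, g (w k) <= g v + (s k * rho (w k) v)%:E.
  move=> k; apply: slope_ineq => //; rewrite -sa; exact: (proj2 (hH _ (dw k))).
have hG : forall k, (G k <= G k.+1 + s k * rho (w k) (w k.+1))%R.
  by move=> k; have := gsl k (w k.+1); rewrite !ga -EFinD lee_fin.
have hGy : forall k, (G k <= gy + s k * rho (w k) y)%R.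
  by move=> k; have := gsl k y; rewrite ga hy -EFinD lee_fin.
have D : forall k, (q * G 0%N <= q * G k + (a 0%N - a k))%R.
  elim => [|k IH]; first lra.
  have h1 : (q * G k <= q * G k.+1 + q * s k * rho (w k) (w k.+1))%R.
    rewrite -mulrA -mulrDr; apply: ler_wpM2l; [exact: ltW | exact: hG].
  have := hd k; lra.
pose P k := (s k * rho (w k) y)%R.
have P0 : forall k, (0 <= P k)%R by move=> k; apply: mulr_ge0.
have hP : forall k, (P k.+1 <= q * P k + (a k - a k.+1))%R.
  move=> k.
  have h1 : (P k.+1 <= (q * s k) * (rho (w k) (w k.+1) + rho (w k) y))%R.
    apply: ler_pM => //; apply: (le_trans (rtri _ (w k) _)); by rewrite [rho (w k.+1) _]rsym.
  have e1 : ((q * s k) * (rho (w k) (w k.+1) + rho (w k) y) =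
     q * s k * rho (w k) (w k.+1) + q * P k)%R by rewrite /P; ring.
  have := hd k; lra.
have [k Pk] : exists k, (P k <= ep)%R.
  apply/not_existsP => H.
  have H' : forall k, (ep < P k)%R by move=> k; rewrite ltNge; apply/negP => /(fun h => H k h).
  pose t : R := ((1 - q) * ep)%R.
  have t0 : (0 < t)%R by rewrite mulr_gt0 // subr_gt0.
  have Hc : forall k, (P k + k%:R * t <= P 0%N + (a 0%N - a k))%R.
    elim => [|k IH]; first by rewrite mul0r; lra.
    have h1 : (t <= (1 - q) * P k)%R.
      by apply: ler_wpM2l; [rewrite subr_ge0 ltW | exact: ltW].
    have e1 : (k.+1%:R * t = k%:R * t + t)%R by rewrite -natr1 mulrDl mul1r.
    have e2 : (q * P k = P k - (1 - q) * P k)%R by ring.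
    have := hP k; lra.
  pose C := (P 0%N + (a 0%N - m))%R.
  have C0 : (0 <= C / t)%R.
    apply: divr_ge0; last exact: ltW.
    by rewrite /C; have := am 0%N; have := P0 0%N; lra.
  have := archi_boundP C0; set n := Num.bound _ => hn.
  have : (C < n%:R * t)%R by rewrite -ltr_pdivrMr.
  have := Hc n; have := am n; have := P0 n; rewrite /C; lra.
have := D k; have := hGy k; have := am k.
have h2 : (q * G k <= q * (gy + P k))%R by apply: ler_wpM2l; [exact: ltW | exact: hGy].
have h3 : (q * P k <= ep)%R.
  have h4 : (0 <= (1 - q) * P k)%R by apply: mulr_ge0; [rewrite subr_ge0 ltW | exact: P0].
  have e3 : ((1 - q) * P k = P k - q * P k)%R by ring.
  lra.
rewrite mulrDr in h2.
have -> : fine (g x) = G 0%N by [].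
have -> : fine (f x) = a 0%N by [].
lra.
Qed.


Lemma real_lim (R : realType) (G gy D : R) :
  (forall q ep : R, (0 < q)%R -> (q < 1)%R -> (0 < ep)%R -> (q * G <= q * gy + ep + D)%R) ->
  (0 <= D)%R -> (G <= gy + D)%R.
Proof.
move=> H D0; rewrite leNgt; apply/negP => Hc.
pose t := (G - gy)%R.
have tD : (D < t)%R by rewrite /t; lra.
have t0 : (0 < t)%R by lra.
pose q := ((D + t) / (2 * t))%R.
have qt : (q * t = (D + t) / 2)%R by rewrite /q; field; rewrite gt_eqF.
have q0 : (0 < q)%R by rewrite /q divr_gt0 //; lra.
have q1 : (q < 1)%R by rewrite /q ltr_pdivrMr; lra.
have ep0 : (0 < (t - D) / 4)%R by rewrite divr_gt0 //; lra.
have := H q _ q0 q1 ep0.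
have e1 : (q * G = q * gy + q * t)%R by rewrite /t; ring.
have e2 : ((D + t) / 2 = (D + t) * 2^-1)%R by [].
have e3 : ((t - D) / 4 = (t - D) * 4^-1)%R by [].
rewrite e1 qt; lra.
Qed.

Lemma key (R : realType) (M : Type) (rho : M -> M -> R) (f g : M -> \bar R)
  (m : R) (x y : M) :
  is_metric rho -> metric_complete rho -> never_minfty f -> never_minfty g ->
  lsc rho f -> lsc rho g -> (forall x, m%:E <= f x) ->
  (forall x, dom_slope rho f x ->
     dom g x /\ global_slope rho g x <= global_slope rho f x) ->
  f x < +oo -> g x <= g y + (f x - m%:E).
Proof.
move=> hm hc hf hg hlf hlg hb hH fx.
have [rpos [rid [rsym rtri]]] := hm.
have fxf : f x \is a fin_num by apply/fin_numP; split; [exact: hf | rewrite lt_eqF].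
set b := fine (f x); have fb : f x = b%:E by rewrite /b fineK.
have bm : (m <= b)%R by have := hb x; rewrite fb lee_fin.
case Ey: (g y) => [gy| |]; last by have := hg y; rewrite Ey.
  2: by rewrite fb -EFinB addye // leey.
rewrite fb -EFinB -EFinD; apply: lee_gt0P => r r0.
rewrite leNgt; apply/negP => H.
have [d [d0 Hd]] := hlg x _ H.
pose mu := ((b - m + 1) / d)%R.
have mu0 : (0 < mu)%R by rewrite /mu divr_gt0 //; lra.
have [z [hz1 hz2]] := ekeland hm hc hf hlf hb fx mu0.
have fzf : f z \is a fin_num.
  apply/fin_numP; split; first exact: hf.
  rewrite lt_eqF //; apply: (le_lt_trans _ fx); apply: (le_trans _ hz1).
  by apply: leeDl; rewrite lee_fin mulr_ge0 // ltW.
set c := fine (f z); have fc : f z = c%:E by rewrite /c fineK.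
have cm : (m <= c)%R by have := hb z; rewrite fc lee_fin.
have hz1' : (c + mu * rho x z <= b)%R by move: hz1; rewrite fc fb -EFinD lee_fin.
have rd : (rho x z < d)%R.
  have : (mu * rho x z < mu * d)%R.
    have -> : (mu * d = b - m + 1)%R by rewrite /mu divfK // gt_eqF.
    lra.
  by rewrite ltr_pM2l.
have := Hd z rd.
have hs := slope_le hm hf fzf (ltW mu0) hz2.
have dz : dom_slope rho f z.
  split; first by rewrite fc ltry.
  by apply: (le_lt_trans hs); exact: ltry.
have [gz _] := hH z dz.
have gzf : g z \is a fin_num by apply/fin_numP; split; [exact: hg | rewrite lt_eqF].
set G := fine (g z); have gG : g z = G%:E by rewrite /G fineK.
have HG : (G <= gy + (c - m))%R.
  apply: real_lim; last lra.
  move=> q ep q0 q1 ep0.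
  have := chain hm hc hf hg hlf hb hH q0 q1 dz Ey ep0.
  by rewrite -/G -/c.
have h0 : (0 <= mu * rho x z)%R by apply: mulr_ge0; [exact: ltW | exact: rpos].
rewrite gG lte_fin; lra.
Qed.

Unset Implicit Arguments.


Theorem theorem3p3 (R : realType) (M : Type) (rho : M -> M -> R)
  (f g : M -> \bar R) :
  is_metric rho -> metric_complete rho ->
  never_minfty f -> never_minfty g ->
  proper_ext f -> proper_ext g ->
  lsc rho f -> lsc rho g ->
  bounded_below f ->
  (forall x, dom_slope rho f x ->
     dom g x /\ global_slope rho g x <= global_slope rho f x) ->
  ereal_inf [set f x - g x | x in dom f] >= ereal_inf (range f) - ereal_inf (range g)
  /\ ereal_inf (range g) > -oo
  /\ (forall x, f x - ereal_inf (range f) >= g x - ereal_inf (range g)).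
Proof.
move=> hm hc hf hg [x0 hx0] [y0 hy0] hlf hlg [m0 hm0] hH.
set If := ereal_inf (range f).
have Ifl : m0%:E <= If by apply: le_ereal_inf_tmp => _ [x _ <-].
have Ifu : If <= f x0 by apply: ereal_inf_lbound; exists x0.
have Iff : If \is a fin_num.
  apply/fin_numP; split.
    by rewrite gt_eqF // (lt_le_trans (ltNyr m0) Ifl).
  by rewrite lt_eqF // (le_lt_trans Ifu hx0).
set mf := fine If; have Ifm : If = mf%:E by rewrite /mf fineK.
have hb : forall x, mf%:E <= f x.
  by move=> x; rewrite -Ifm; apply: ereal_inf_lbound; exists x.
have K := fun x y => @key R M rho f g mf x y hm hc hf hg hlf hlg hb hH.
have ffin : forall x, f x < +oo -> f x \is a fin_num.
  by move=> x fx; apply/fin_numP; split; [exact: hf | rewrite lt_eqF].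
have gy0f : g y0 \is a fin_num.
  by apply/fin_numP; split; [exact: hg | rewrite lt_eqF].
have gfin : forall x, f x < +oo -> g x \is a fin_num.
  move=> x fx; apply/fin_numP; split; first exact: hg.
  rewrite lt_eqF //; apply: (le_lt_trans (K x y0 fx)).
  by rewrite -(fineK gy0f) -(fineK (ffin x fx)) -EFinB -EFinD ltry.
have H1 : forall x y, f x < +oo ->
    ((fine (g x) - (fine (f x) - mf))%:E <= g y).
  move=> x y fx; have := K x y fx.
  rewrite -(fineK (gfin x fx)) -(fineK (ffin x fx)) -EFinB.
  move: (hg y); case: (g y) => [gy| |] // _.
    by rewrite -EFinD !lee_fin; lra.
  by move=> _; exact: leey.
set Ig := ereal_inf (range g).
have H2 : forall x, f x < +oo -> (fine (g x) - (fine (f x) - mf))%:E <= Ig.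
  by move=> x fx; apply: le_ereal_inf_tmp => _ [y _ <-]; exact: H1.
have Igu : Ig <= g y0 by apply: ereal_inf_lbound; exists y0.
have Igf : Ig \is a fin_num.
  apply/fin_numP; split.
    by rewrite gt_eqF // (lt_le_trans _ (H2 x0 hx0)) // ltNyr.
  by rewrite lt_eqF // (le_lt_trans Igu hy0).
set ig := fine Ig; have Igi : Ig = ig%:E by rewrite /ig fineK.
split.
  apply: le_ereal_inf_tmp => _ [x hx <-].
  have := H2 x hx.
  rewrite Ifm Igi -(fineK (gfin x hx)) -(fineK (ffin x hx)) -!EFinB !lee_fin.
  lra.
split; first by rewrite Igi ltNyr.
move=> x; case: (pselect (f x < +oo)) => [fx|fx].
  have := H2 x fx.
  rewrite Ifm Igi -(fineK (gfin x fx)) -(fineK (ffin x fx)) -!EFinB !lee_fin.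
  lra.
have -> : f x = +oo by move: fx; case: (f x) => // r; rewrite ltry.
by rewrite Ifm addye // leey.
Qed.
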